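(* Let $n,k\ge 1$ be integers, let $\mathcal{D}$ be a set, and let $h_1,\dots,h_k:\mathcal{D}\to\{0,1\}$ be indicator functions such that $\sum_{j=1}^k h_j(d)=1$ for all $d\in\mathcal{D}$ (so each data point belongs to exactly one class). Let $\alpha\in(0,\frac1k]$ and let $X=(D_1,\dots,D_n)$ be a random database whose entries $D_1,\dots,D_n$ are independent (not necessarily identically distributed) and satisfy $P_{D_i}(\{d\in\mathcal{D}: h_j(d)=1\})\ge\alpha$ for all $i\in[n]$ and $j\in[k]$. Let $b>0$ and let $N_1,\dots,N_k$ be i.i.d. Laplace random variables with mean $0$ and scale $b$ (density $\frac{1}{2b}e^{-|t|/b}$), independent of $X$. Define the output $Y^k=(Y_1,\dots,Y_k)$ by $$Y_j=\sum_{i=1}^n h_j(D_i)+N_j,\qquad j\in[k].$$ Then for every $i\in[n]$ and every $y^k\in\mathbb{R}^k$, $$\ell(D_i\to y^k)\le \frac{2}{b}-\log\Big(1-\alpha+\alpha\exp\big(\tfrac{2}{b}\big)\Big),$$ where $\ell(D_i\to y^k)=\log\sup_{d\in\mathcal{D}}\frac{M_{Y\mid D_i}(y^k\mid d)}{M_Y(y^k)}$, with $M_{Y\mid D_i}(\cdot\mid d)$ the conditional density of $Y^k$ given $D_i=d$ and $M_Y$ the marginal density of $Y^k$.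
   Context: $\log$ denotes the natural logarithm and $[n]=\{1,\dots,n\}$. The quantity $\ell(D_i\to y^k)$ is the pointwise maximal leakage from the $i$-th record $D_i$ to the outcome $y^k$ of the mechanism; the densities involved are with respect to Lebesgue measure on $\mathbb{R}^k$, with the randomness of the other records $D_{i'}$, $i'\ne i$, and of the noise integrated out. *)

(* Defs.v *)
From HB Require Import structures.
From mathcomp Require Import all_boot all_order all_algebra.
From mathcomp Require Import all_classical all_reals all_analysis.
Set Implicit Arguments. Unset Strict Implicit. Unset Printing Implicit Defensive.
Import Order.TTheory GRing.Theory Num.Theory.
Local Open Scope classical_set_scope.
Local Open Scope ring_scope.

Definition mutually_independent (R : realType) (dO : measure_display)
  (Omega : measurableType dO) (P : probability Omega R)
  (dD : measure_display) (D : measurableType dD) (n : nat)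
  (X : 'I_n -> Omega -> D) : Prop :=
  forall (I : {set 'I_n}) (A : 'I_n -> set D),
    (forall i, i \in I -> measurable (A i)) ->
    P (\big[setI/setT]_(i in I) (X i @^-1` A i)) =
    (\prod_(i in I) P (X i @^-1` A i))%E.

Definition laplace_pdf (R : realType) (b t : R) : R :=
  (2 * b)^-1 * expR (- `|t| / b).

(* Marginal density of Y^k at y: the Laplace noise (independent of the
   database) is integrated out analytically, the database is integrated
   out w.r.t. P. *)
Definition density_Y (R : realType) (dO : measure_display)
  (Omega : measurableType dO) (P : probability Omega R)
  (dD : measure_display) (D : measurableType dD) (n k : nat)
  (h : 'I_k -> D -> bool) (X : 'I_n -> Omega -> D) (b : R) (y : 'I_k -> R) : R :=
  fine (\int[P]_w (\prod_(j < k)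
      laplace_pdf b (y j - \sum_(i < n) ((h j (X i w) : nat)%:R)))%:E).

(* Conditional density of Y^k at y given D_i = d: the other records and the
   noise are integrated out. *)
Definition cond_density_Y (R : realType) (dO : measure_display)
  (Omega : measurableType dO) (P : probability Omega R)
  (dD : measure_display) (D : measurableType dD) (n k : nat)
  (h : 'I_k -> D -> bool) (X : 'I_n -> Omega -> D) (b : R) (i : 'I_n)
  (y : 'I_k -> R) (d : D) : R :=
  fine (\int[P]_w (\prod_(j < k)
      laplace_pdf b (y j - (h j d : nat)%:R
                     - \sum_(i' < n | i' != i) ((h j (X i' w) : nat)%:R)))%:E).

(* Pointwise maximal leakage  l(D_i -> y) = log sup_d M(y|d) / M(y),
   valued in the extended reals (log(+oo) = +oo). *)
Definition pml (R : realType) (dO : measure_display)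
  (Omega : measurableType dO) (P : probability Omega R)
  (dD : measure_display) (D : measurableType dD) (n k : nat)
  (h : 'I_k -> D -> bool) (X : 'I_n -> Omega -> D) (b : R) (i : 'I_n)
  (y : 'I_k -> R) : \bar R :=
  let s := ereal_sup [set (cond_density_Y P h X b i y d / density_Y P h X b y)%:E
                      | d in [set: D]] in
  match s with
  | r%:E => (ln r)%:E
  | _ => s
  end.

(* Main.v *)
Require Import Defs.
From HB Require Import structures.
From mathcomp Require Import all_boot all_order all_algebra.
From mathcomp Require Import all_classical all_reals all_analysis.
From mathcomp Require Import measurable_realfun ring lra.
Import Order.TTheory GRing.Theory Num.Theory.
Local Open Scope classical_set_scope.
Local Open Scope ring_scope.

Lemma int_sum_indic (R : realType) (dO : measure_display)
  (Omega : measurableType dO) (P : probability Omega R) (I : Type) (s : seq I)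
  (a : I -> R) (S : I -> set Omega) :
  (forall t, 0 <= a t) -> (forall t, measurable (S t)) ->
  (\int[P]_w (\sum_(t <- s) a t * \1_(S t) w)%:E =
   (\sum_(t <- s) a t * fine (P (S t)))%:E)%E.
Proof.
move=> a0 mS.
rewrite (eq_integral (fun w => \sum_(t <- s) (a t * \1_(S t) w)%:E)%E); last first.
  by move=> w _; rewrite sumEFin.
rewrite ge0_integral_sum //; last first.
  by move=> t w _; rewrite lee_fin mulr_ge0.
  move=> t; apply/measurable_EFinP; apply: measurable_funM => //.
rewrite -sumEFin; apply: eq_bigr => t _.
rewrite (@integralZl_indic _ _ _ _ _ _ (fun _ => S t)) //; last first.
  by rewrite ltNge a0.
rewrite integral_indic // setIT EFinM fineK //.
exact: fin_num_measure.
Qed.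

Lemma meas_sum_indic (R : realType) (dO : measure_display)
  (Omega : measurableType dO) (I : Type) (s : seq I)
  (a : I -> R) (S : I -> set Omega) :
  (forall t, measurable (S t)) ->
  measurable_fun setT (fun w => (\sum_(t <- s) a t * \1_(S t) w)%:E).
Proof.
move=> mS; apply/measurable_EFinP; apply: measurable_sum => t.
apply: measurable_funM => //; exact: measurable_indic.
Qed.

Section Comb.
Variables (R : realType) (dO : measure_display) (Omega : measurableType dO)
  (dD : measure_display) (D : measurableType dD) (n k : nat) (hk : (0 < k)%N)
  (h : 'I_k -> D -> bool)
  (hmeas : forall j, measurable [set d | h j d])
  (hpart : forall d, (\sum_(j < k) (h j d : nat))%N = 1%N)
  (X : 'I_n -> Omega -> D)
  (Xmeas : forall i, measurable_fun setT (X i)).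

Definition a0 : 'I_k := Ordinal hk.
Definition J (x : D) : 'I_k := odflt a0 [pick j | h j x].

Lemma hJ x j : h j x = (J x == j).
Proof.
rewrite /J; case: pickP => [j0 hj0 | hn] /=; last first.
  have := hpart x; rewrite big1 // => j' _; by rewrite hn.
case: (eqVneq j0 j) => [<- // | ne].
apply/negP => hj; have := hpart x.
rewrite (bigD1 j0) //= (bigD1 j) /=; last by rewrite eq_sym ne.
by rewrite hj0 hj.
Qed.

Definition E (I : {set 'I_n}) (t : {ffun 'I_n -> 'I_k}) : set Omega :=
  \big[setI/setT]_(i' in I) (X i' @^-1` [set x | h (t i') x]).

Lemma memE I t w : E I t w <-> forall i', i' \in I -> h (t i') (X i' w).
Proof.
split.
  move=> H i' Hi; move: H; rewrite /E (bigD1 i') //=; by case.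
move=> H; rewrite /E; apply: (big_ind (fun S : set Omega => S w)) => //;
  try (by move=> S1 S2 ? ?; split); by move=> i' Hi; apply: H.
Qed.

Lemma measE I t : measurable (E I t).
Proof.
rewrite /E; apply: big_ind => //; try (by move=> S1 S2; apply: measurableI).
move=> i' _; rewrite -[X i' @^-1` _]setTI; exact: Xmeas.
Qed.

Definition sI (I : {set 'I_n}) : seq {ffun 'I_n -> 'I_k} :=
  [seq t : {ffun 'I_n -> 'I_k} <- index_enum {ffun 'I_n -> 'I_k} | [forall i', (i' \notin I) ==> (t i' == a0)]].

Definition tw (I : {set 'I_n}) (w : Omega) : {ffun 'I_n -> 'I_k} :=
  [ffun i' => if i' \in I then J (X i' w) else a0].

Lemma tw_in I w : tw I w \in sI I.
Proof.
rewrite mem_filter mem_index_enum andbT; apply/forallP => i'.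
by apply/implyP => Hi; rewrite ffunE (negbTE Hi).
Qed.

Lemma E_tw I w : E I (tw I w) w.
Proof. by apply/memE => i' Hi; rewrite ffunE Hi hJ. Qed.

Lemma E_uniq I t w : t \in sI I -> E I t w -> t = tw I w.
Proof.
rewrite mem_filter => /andP[/forallP Ht _] /memE He.
apply/ffunP => i'; rewrite ffunE; case: ifP => Hi.
  by apply/eqP; rewrite eq_sym -hJ; apply: He.
by apply/eqP; move/implyP: (Ht i'); apply; rewrite Hi.
Qed.

Lemma repr I (g : {ffun 'I_n -> 'I_k} -> R) w :
  \sum_(t <- sI I) g t * \1_(E I t) w = g (tw I w).
Proof.
rewrite (bigD1_seq (tw I w)) /=; last first.
- by rewrite filter_uniq // index_enum_uniq.
- exact: tw_in.
rewrite indicE (mem_set (E_tw I w)) mulr1 big1_seq ?addr0 // => t /andP[ne Ht].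
rewrite indicE; case: (boolP (w \in E I t)) => [/set_mem /(@E_uniq _ _ _ Ht) e|_].
  by rewrite e eqxx in ne.
by rewrite mulr0.
Qed.

End Comb.

Lemma lap_shift (R : realType) (b u x x' : R) : 0 < b ->
  expR (- `|x - x'| / b) * laplace_pdf b (u - x') <= laplace_pdf b (u - x).
Proof.
move=> hb; rewrite /laplace_pdf mulrCA ler_wpM2l //.
  by rewrite invr_ge0 mulr_ge0 // ltW.
rewrite -expRD ler_expR -mulrDl ler_pM2r ?invr_gt0 // lerNr opprD !opprK.
have -> : u - x = (u - x') + (x' - x) by rewrite addrA subrK.
by rewrite (le_trans (ler_normD _ _)) // [leRHS]addrC (distrC x).
Qed.

Lemma lap_ge0 (R : realType) (b t : R) : 0 < b -> 0 <= laplace_pdf b t.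
Proof. by move=> hb; rewrite /laplace_pdf mulr_ge0 ?expR_ge0 // invr_ge0 mulr_ge0 // ltW. Qed.

Lemma lap_prod_shift (R : realType) (k : nat) (b : R) (u x x' : 'I_k -> R) : 0 < b ->
  expR (\sum_(j < k) (- `|x j - x' j| / b)) * \prod_(j < k) laplace_pdf b (u j - x' j)
  <= \prod_(j < k) laplace_pdf b (u j - x j).
Proof.
move=> hb; rewrite expR_sum -big_split /=; apply: ler_prod => j _.
by rewrite mulr_ge0 ?expR_ge0 ?lap_ge0 // lap_shift.
Qed.

Lemma ln_le0_eq (R : realType) (x : R) : x <= 0 -> ln x = 0.
Proof.
move=> hx; rewrite /ln; case: xgetP => //= y _ /eqP H.
by move: hx; rewrite -H leNgt expR_gt0.
Qed.

Lemma ratio_bound (R : realType) (C r K : R) : 0 < K -> 0 <= C -> 0 <= r ->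
  K * C <= r -> C / r <= K^-1.
Proof.
move=> K0 C0 r0 H; have [->|rne] := eqVneq r 0.
  by rewrite invr0 mulr0 invr_ge0 ltW.
have rp : 0 < r by rewrite lt_def rne r0.
rewrite ler_pdivrMr // (_ : C = K^-1 * (K * C)); last by rewrite mulrA mulVf ?mul1r // gt_eqF.
by rewrite ler_wpM2l // invr_ge0 ltW.
Qed.

Lemma ln_K (R : realType) (b alpha : R) : 0 < b -> 0 < alpha ->
  ln (expR (- (2 / b)) + (1 - expR (- (2 / b))) * alpha)^-1 =
  2 / b - ln (1 - alpha + alpha * expR (2 / b)).
Proof.
move=> hb ha.
have e1 : expR (- (2 / b)) * expR (2 / b) = 1 by rewrite -expRD addNr expR0.
have -> : expR (- (2 / b)) + (1 - expR (- (2 / b))) * alpha =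
          expR (- (2 / b)) * (1 - alpha + alpha * expR (2 / b)).
  by rewrite mulrDr mulrCA e1 mulrBr mulr1 mulrBl mul1r; ring.
have pos : 0 < 1 - alpha + alpha * expR (2 / b).
  have : 1 <= expR (2 / b) by rewrite -expR0 ler_expR divr_ge0 // ltW.
  move=> H; have : alpha <= alpha * expR (2 / b) by rewrite ler_peMr // ltW.
  lra.
rewrite lnV ?posrE ?mulr_gt0 ?expR_gt0 // lnM ?posrE ?expR_gt0 // expRK.
by rewrite opprD opprK.
Qed.
Theorem theorem1 (R : realType) (dO : measure_display)
  (Omega : measurableType dO) (P : probability Omega R)
  (dD : measure_display) (D : measurableType dD) (n k : nat)
  (hn : (0 < n)%N) (hk : (0 < k)%N)
  (h : 'I_k -> D -> bool)
  (hmeas : forall j, measurable [set d | h j d])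
  (hpart : forall d, (\sum_(j < k) (h j d : nat))%N = 1%N)
  (alpha : R) (halpha0 : 0 < alpha) (halpha1 : alpha <= (k%:R)^-1)
  (X : 'I_n -> Omega -> D)
  (Xmeas : forall i, measurable_fun setT (X i))
  (Xindep : mutually_independent P X)
  (Xclass : forall i j, (alpha%:E <= P (X i @^-1` [set d | h j d]))%E)
  (b : R) (hb : 0 < b) :
  forall (i : 'I_n) (y : 'I_k -> R),
    (pml P h X b i y <= (2 / b - ln (1 - alpha + alpha * expR (2 / b)))%:E)%E.
Proof.
move=> i y.
have hJ' := @hJ _ D k hk h hpart.
have rep := @repr R dO Omega dD D n k hk h hpart X.
have mE := @measE dO Omega dD D n k h hmeas X Xmeas.
set c := expR (- (2 / b)).
have c0 : 0 < c by exact: expR_gt0.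
have c1 : c < 1 by rewrite /c expR_lt1 oppr_lt0 divr_gt0.
set K := c + (1 - c) * alpha.
have K0 : 0 < K.
  have : 0 <= (1 - c) * alpha by rewrite mulr_ge0 // ?subr_ge0 ltW.
  rewrite /K; lra.
have Hd : forall d, cond_density_Y P h X b i y d / density_Y P h X b y <= K^-1.
  move=> d.
  set Ic := [set~ i]%SET.
  set Ad := [set x | h (J dD D k hk h d) x].
  set A' := X i @^-1` Ad.
  have mA' : measurable A' by rewrite -[A']setTI; exact: (Xmeas i measurableT _ (hmeas _)).
  set G := fun t : {ffun 'I_n -> 'I_k} => \prod_(j < k) laplace_pdf b
     (y j - (h j d : nat)%:R - \sum_(i' < n | i' != i) ((t i' == j) : nat)%:R).
  set H := fun t : {ffun 'I_n -> 'I_k} => \prod_(j < k) laplace_pdf b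
     (y j - \sum_(i' < n) ((t i' == j) : nat)%:R).
  have G0 t : 0 <= G t by apply: prodr_ge0 => j _; exact: lap_ge0.
  have H0 t : 0 <= H t by apply: prodr_ge0 => j _; exact: lap_ge0.
  set ss := sI n k hk Ic.
  set EE := E dO Omega dD D n k h X.
  set C := \sum_(t <- ss) G t * fine (P (EE Ic t)).
  have condE : cond_density_Y P h X b i y d = C.
    rewrite /cond_density_Y (eq_integral (fun w =>
      (\sum_(t <- ss) G t * \1_(EE Ic t) w)%:E)); last first.
      move=> w _; congr EFin; rewrite rep /G; apply: eq_bigr => j _.
      congr (laplace_pdf b (_ - _)); apply: eq_bigr => i' Hi.
      by rewrite ffunE in_setC1 Hi /= hJ'.
    by rewrite int_sum_indic //= => t; apply: mE.
  have Mrep : forall w, \prod_(j < k) laplace_pdf b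
       (y j - \sum_(i' < n) ((h j (X i' w) : nat)%:R)) =
      \sum_(t <- sI n k hk [set: 'I_n]%SET) H t * \1_(EE [set: 'I_n]%SET t) w.
    move=> w; rewrite rep /H; apply: eq_bigr => j _.
    congr (laplace_pdf b (_ - _)); apply: eq_bigr => i' _.
    by rewrite ffunE finset.in_setT hJ'.
  have indep : forall t, P (A' `&` EE Ic t) = (P A' * P (EE Ic t))%E.
    move=> t.
    have e1 := Xindep [set: 'I_n]%SET
      (fun i' => if i' == i then Ad else [set x | h (t i') x])
      (fun i' _ => if i' == i as bb return measurable (if bb then Ad else [set x | h (t i') x])
                   then hmeas _ else hmeas _).
    have e2 := Xindep Ic (fun i' => [set x | h (t i') x]) (fun _ _ => hmeas _).
    rewrite /EE /E e2.
    have -> : A' `&` \big[setI/setT]_(i' in Ic) X i' @^-1` [set x | h (t i') x] =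
      \big[setI/setT]_(i' in [set: 'I_n]%SET) X i' @^-1`
         (if i' == i then Ad else [set x | h (t i') x]).
      rewrite [RHS](bigD1 i) ?finset.in_setT //= eqxx; congr (_ `&` _).
      apply: eq_big => i'; first by rewrite finset.in_setT in_setC1.
      by rewrite ?finset.in_setT ?in_setC1 /= => ne; rewrite (negbTE ne).
    rewrite e1 (bigD1 i) ?finset.in_setT //= eqxx; congr (_ * _)%E.
    apply: eq_big => i'; first by rewrite finset.in_setT in_setC1.
    by rewrite ?finset.in_setT ?in_setC1 /= => ne; rewrite (negbTE ne).
  set TT := tw dO Omega dD D n k hk h X.
  set s2 := [seq inl t | t <- ss] ++ [seq inr t | t <- ss].
  pose a := fun u : {ffun 'I_n -> 'I_k} + {ffun 'I_n -> 'I_k} =>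
    match u with inl t => c * G t | inr t => (1 - c) * G t end.
  pose S := fun u : {ffun 'I_n -> 'I_k} + {ffun 'I_n -> 'I_k} =>
    match u with inl t => EE Ic t | inr t => A' `&` EE Ic t end.
  have a0' u : 0 <= a u by case: u => t /=; rewrite mulr_ge0 // ?subr_ge0 ltW.
  have mS u : measurable (S u) by case: u => t /=; [exact: mE | exact: measurableI].
  have Lpt : forall w, \sum_(u <- s2) a u * \1_(S u) w =
      G (TT Ic w) * (c + (1 - c) * \1_A' w).
    move=> w; rewrite big_cat !big_map /=.
    rewrite (eq_bigr (fun t => (c * G t) * \1_(EE Ic t) w)) // rep.
    rewrite (eq_bigr (fun t => ((1 - c) * G t * \1_A' w) * \1_(EE Ic t) w)); last first.
      by move=> t _; rewrite indicI /= !mulrA.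
    rewrite rep; ring.
  have Mge : forall w, \sum_(u <- s2) a u * \1_(S u) w <=
      \prod_(j < k) laplace_pdf b (y j - \sum_(i' < n) ((h j (X i' w) : nat)%:R)).
    move=> w; rewrite Lpt.
    pose u := fun j => y j - \sum_(i' < n | i' != i) ((h j (X i' w) : nat)%:R).
    have eM : \prod_(j < k) laplace_pdf b (y j - \sum_(i' < n) ((h j (X i' w) : nat)%:R))
        = \prod_(j < k) laplace_pdf b (u j - (h j (X i w) : nat)%:R).
      apply: eq_bigr => j _; rewrite (bigD1 i) //= /u; congr (laplace_pdf b _); ring.
    have eG : G (TT Ic w) = \prod_(j < k) laplace_pdf b (u j - (h j d : nat)%:R).
      rewrite /G; apply: eq_bigr => j _; rewrite /u; congr (laplace_pdf b _).
      rewrite (eq_bigr (fun i' => ((h j (X i' w)) : nat)%:R)); first ring.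
      by move=> i' Hi; rewrite ffunE in_setC1 Hi /= hJ'.
    have sh := @lap_prod_shift R k b u (fun j => (h j (X i w) : nat)%:R)
      (fun j => (h j d : nat)%:R) hb.
    rewrite eM eG; apply: le_trans sh; rewrite mulrC; apply: ler_wpM2r.
      by apply: prodr_ge0 => j _; exact: lap_ge0.
    case: (boolP (h (J dD D k hk h d) (X i w))) => hx.
    - have eJ : J dD D k hk h (X i w) = J dD D k hk h d by apply/eqP; rewrite -hJ'.
      have ej : forall j, h j (X i w) = h j d by move=> j; rewrite !hJ' eJ.
      rewrite (eq_bigr (fun _ => 0)); last first.
        by move=> j _; rewrite ej subrr normr0 oppr0 mul0r.
      rewrite big1_eq expR0 indicE (mem_set (hx : A' w)) /= mulr1n; lra.
    - rewrite indicE (@memNset _ A' w (elimT negP hx)). match goal with |- is_true (_ <= ?E) => change (c + (1 - c) * 0 <= E) end. rewrite mulr0 addr0 /c ler_expR.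
      apply: (@le_trans _ _ (\sum_(j < k) (- ((h j (X i w) : nat)%:R + (h j d : nat)%:R) / b))).
        rewrite -mulr_suml sumrN big_split /= -!natr_sum !hpart mulNr.
        by rewrite -natrD.
      apply: ler_sum => j _; rewrite !mulNr lerN2 ler_pM2r ?invr_gt0 //.
      by rewrite (le_trans (ler_normB _ _)) // !ger0_norm.
  have IL : (\int[P]_w (\sum_(u <- s2) a u * \1_(S u) w)%:E =
      ((c + (1 - c) * fine (P A')) * C)%:E)%E.
    rewrite int_sum_indic //; congr EFin; rewrite big_cat !big_map /=.
    rewrite (eq_bigr (fun t => c * (G t * fine (P (EE Ic t))))); last first.
      by move=> t _; rewrite mulrA.
    rewrite [X in _ + X](eq_bigr (fun t => (1 - c) * fine (P A') * (G t * fine (P (EE Ic t))))); last first.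
      by move=> t _; rewrite indep fineM ?fin_num_measure //; ring.
    rewrite -!mulr_sumr /C; ring.
  have Mint : measurable_fun setT (fun w => (\prod_(j < k) laplace_pdf b
      (y j - \sum_(i' < n) ((h j (X i' w) : nat)%:R)))%:E).
    rewrite (_ : (fun w => _) = (fun w => (\sum_(t <- sI n k hk [set: 'I_n]%SET)
        H t * \1_(EE [set: 'I_n]%SET t) w)%:E)); first exact: meas_sum_indic.
    by apply/funext => w0; rewrite Mrep.
  have IMge : (((c + (1 - c) * fine (P A')) * C)%:E <= \int[P]_w (\prod_(j < k)
      laplace_pdf b (y j - \sum_(i0 < n) ((h j (X i0 w) : nat)%:R)))%:E)%E.
    rewrite -IL; apply: ge0_le_integral => //.
    - move=> w _; rewrite lee_fin; apply: sumr_ge0 => u _.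
      by rewrite mulr_ge0 // indicE ler0n.
    - exact: meas_sum_indic.
    - by move=> w _; rewrite lee_fin Mge.
  have pAa : alpha <= fine (P A').
    by rewrite -lee_fin fineK ?fin_num_measure //; exact: Xclass.
  have C0 : 0 <= C.
    by apply: sumr_ge0 => t _; rewrite mulr_ge0 // fine_ge0 // measure_ge0.
  have IM0 : (0 <= \int[P]_w (\prod_(j < k)
      laplace_pdf b (y j - \sum_(i0 < n) ((h j (X i0 w) : nat)%:R)))%:E)%E.
    by apply: integral_ge0 => w _; rewrite lee_fin prodr_ge0 // => j _; exact: lap_ge0.
  rewrite condE /density_Y; move: IMge IM0.
  case: (\int[P]_w _)%E => [r| |] /= IMge IM0; try by rewrite invr0 mulr0 invr_ge0 ltW.
  rewrite lee_fin in IM0 IMge; apply: ratio_bound => //.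
  rewrite lee_fin in IMge; apply: (le_trans _ IMge); apply: ler_wpM2r => //; rewrite lerD2l; apply: ler_wpM2l => //; by rewrite subr_ge0 ltW.
have Kp : 0 < K^-1 by rewrite invr_gt0.
have HS : (ereal_sup [set (cond_density_Y P h X b i y d / density_Y P h X b y)%:E
    | d in [set: D]] <= (K^-1)%:E)%E.
  by apply: ge_ereal_sup => _ [d _ <-]; rewrite lee_fin Hd.
rewrite /pml /=; move: HS; case: ereal_sup => [r| |] //= HS.
rewrite lee_fin in HS; rewrite lee_fin -ln_K // -/c -/K.
have [r0|r0] := ltrP 0 r; first by rewrite ler_ln // posrE.
rewrite ln_le0_eq // ln_ge0 // invf_ge1 // /K.
have a1 : alpha <= 1.
  apply: (le_trans halpha1); rewrite invf_le1 ?ltr0n // ler1n //.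
have : (1 - c) * alpha <= (1 - c) * 1 by rewrite ler_wpM2l // subr_ge0 ltW.
lra.
exact: leNye.
Qed.
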